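(* Let $C=C(m,n;k,l;c,d)$ be a $C$-shaped supergrid graph with $a=m-k=1$, and let $s,t$ be two distinct vertices of $C$ (labeled so that $s_x\leq t_x$) such that $(C,s,t)$ satisfies none of the conditions: (F1) $s$ or $t$ is a cut vertex of $C$, or $\{s,t\}$ is a vertex cut of $C$; (F3) there is a vertex $w\in V(C)$ with $\deg(w)=1$, $w\neq s$, $w\neq t$; (F9) $a=1$, and ($s_y,t_y\leq c$ or $s_y,t_y>c+l$). Then $C$ contains a Hamiltonian path from $s$ to $t$.
   Context: The supergrid graph $S^\infty$ has vertex set $\mathbb{Z}^2$, two distinct vertices $u,v$ being adjacent iff $|u_x-v_x|\leq 1$ and $|u_y-v_y|\leq 1$; a supergrid graph is a finite vertex-induced subgraph of $S^\infty$. For integers $m\geq 2$, $n\geq 3$, $k,l,c\geq 1$ with $d=n-l-c\geq 1$ and $a=m-k\geq 1$, $C(m,n;k,l;c,d)$ is the supergrid graph induced by $\{(x,y):1\leq x\leq m,\ 1\leq y\leq n\}\setminus\{(x,y): a+1\leq x\leq m,\ c+1\leq y\leq c+l\}$. A cut vertex $v$: $C-v$ disconnected; a vertex cut $V_1$: $C-V_1$ disconnected. A Hamiltonian path from $s$ to $t$ is a simple path from $s$ to $t$ visiting every vertex exactly once. *)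

(* Defs.v *)
(* Vertices of C(m,n;k,l;c,d) are pairs of naturals (x,y);
   all of them have positive coordinates, so nat is adequate for Z^2 here. *)
From mathcomp Require Import all_boot.
Set Implicit Arguments. Unset Strict Implicit. Unset Printing Implicit Defensive.

Definition vtx := (nat * nat)%type.

Definition sadj (u v : vtx) : bool :=
  [&& u != v, u.1 <= v.1 + 1, v.1 <= u.1 + 1, u.2 <= v.2 + 1 & v.2 <= u.2 + 1].

Definition inC (m n k l c : nat) (v : vtx) : bool :=
  [&& 1 <= v.1 <= m, 1 <= v.2 <= n &
      ~~ ((m - k + 1 <= v.1 <= m) && (c + 1 <= v.2 <= c + l))].

Definition box (m n : nat) : seq vtx :=
  [seq (x, y) | x <- iota 1 m, y <- iota 1 n].

Definition degC (m n k l c : nat) (w : vtx) : nat :=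
  size [seq u <- box m n | inC m n k l c u && sadj w u].

Definition joined_avoiding (m n k l c : nat) (P : pred vtx) (u w : vtx) : Prop :=
  exists p : seq vtx, [/\ path sadj u p, last u p = w &
     all (fun x => inC m n k l c x && ~~ P x) p].

Definition disconnected_without (m n k l c : nat) (P : pred vtx) : Prop :=
  exists u w : vtx, [/\ inC m n k l c u, ~~ P u, inC m n k l c w, ~~ P w &
     ~ joined_avoiding m n k l c P u w].

Definition cut_vertex (m n k l c : nat) (v : vtx) : Prop :=
  inC m n k l c v /\ disconnected_without m n k l c (pred1 v).

Definition vertex_cut2 (m n k l c : nat) (s t : vtx) : Prop :=
  disconnected_without m n k l c (pred2 s t).

Definition ham_path (m n k l c : nat) (s t : vtx) : Prop :=
  exists p : seq vtx, [/\ path sadj s p, last s p = t, uniq (s :: p) &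
     forall v, inC m n k l c v = (v \in s :: p)].

Definition F1 m n k l c (s t : vtx) : Prop :=
  cut_vertex m n k l c s \/ cut_vertex m n k l c t \/ vertex_cut2 m n k l c s t.

Definition F3 m n k l c (s t : vtx) : Prop :=
  exists w, [/\ inC m n k l c w, degC m n k l c w = 1, w != s & w != t].

Definition F9 m k l c (s t : vtx) : Prop :=
  m - k = 1 /\ ((s.2 <= c /\ t.2 <= c) \/ (c + l < s.2 /\ c + l < t.2)).

(* Main.v *)
Require Import Defs.
From mathcomp Require Import all_boot.
From mathcomp Require Import zify.

Definition hp (P : vtx -> bool) (s t : vtx) : Prop :=
  exists p : seq vtx, [/\ path sadj s p, last s p = t, uniq (s :: p) &
     forall v, P v = (v \in s :: p)].

Definition rect x0 x1 y0 y1 (v : vtx) : bool := (x0 <= v.1 <= x1) && (y0 <= v.2 <= y1).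

Lemma sadjC u v : sadj u v = sadj v u.
Proof. case: u v => [a b] [c d]; rewrite /sadj /= !xpair_eqE; lia. Qed.

Lemma hp_ext P Q s t : (forall v, P v = Q v) -> hp P s t -> hp Q s t.
Proof. move=> E [p [h1 h2 h3 h4]]; exists p; split=> // v; by rewrite -E h4. Qed.

Lemma hp1 s : hp (fun v => v == s) s s.
Proof. exists [::]; split=> // v; by rewrite inE. Qed.

Lemma hp_cat P Q s u v t : hp P s u -> hp Q v t -> sadj u v ->
  (forall x, P x -> Q x -> False) -> hp (fun x => P x || Q x) s t.
Proof.
move=> [p [h1 h2 h3 h4]] [q [g1 g2 g3 g4]] a D.
exists (p ++ v :: q); split.
- by rewrite cat_path h1 h2 /= a g1.
- by rewrite last_cat h2.
- rewrite -cat_cons cat_uniq h3 g3 andbT; apply/hasPn => x xq.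
  apply/negP => xp. apply: (D x); by [rewrite h4 | rewrite g4].
- by move=> x; rewrite h4 g4 -cat_cons mem_cat.
Qed.

Lemma hp_rev P s t : hp P s t -> hp P t s.
Proof.
move=> [p [h1 h2 h3 h4]].
have E : t :: rev (belast s p) = rev (s :: p) by rewrite [s :: p]lastI rev_rcons h2.
exists (rev (belast s p)); split.
- have := rev_path sadj s p; rewrite h2 => ->.
  by rewrite (eq_path (e' := sadj)) // => x y; rewrite sadjC.
- have : last t (t :: rev (belast s p)) = s by rewrite E rev_cons last_rcons.
  by [].
- by rewrite E rev_uniq.
- by move=> x; rewrite E mem_rev h4.
Qed.

Lemma hp_map (f : vtx -> vtx) (P Q : vtx -> bool) s t : hp P s t ->
  (forall u v, P u -> P v -> sadj (f u) (f v) = sadj u v) ->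
  (forall u v, P u -> P v -> f u = f v -> u = v) ->
  (forall w, Q w -> exists2 v, P v & f v = w) ->
  (forall v, P v -> Q (f v)) -> hp Q (f s) (f t).
Proof.
move=> [p [h1 h2 h3 h4]] A I S1 S2.
exists (map f p); split.
- rewrite path_map. 
  have : all P (s :: p) by apply/allP => x; rewrite h4.
  elim: p s h1 {h2 h3 h4} => [|y p IH] x //= /andP [a b] /and3P [px py pp].
  rewrite A // a /=; apply: IH => //=; by rewrite py.
- by rewrite last_map h2.
- rewrite -map_cons map_inj_in_uniq // => x y xi yi; apply: I; by rewrite h4.
- move=> w; apply/idP/idP.
  + move=> /S1 [v pv <-]; rewrite -map_cons; apply: map_f; by rewrite -h4.
  + rewrite -map_cons => /mapP [v vi ->]; apply: S2; by rewrite h4.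
Qed.
Arguments hp_ext {P Q s t}.
Arguments hp_cat {P Q s u v t}.
Arguments hp_rev {P s t}.
Arguments hp_map f {P Q s t}.

Ltac fin := rewrite /rect /sadj /= ?xpair_eqE; lia.
Ltac fin2 := first [ move=> [? ?]; fin | fin ].

Lemma hp_eq P s t s' t' : hp P s t -> s' == s -> t' == t -> hp P s' t'.
Proof. by move=> H /eqP -> /eqP ->. Qed.
Arguments hp_eq {P s t s' t'}.

Lemma hp_catE P Q R s u v t s' t' : hp P s u -> hp Q v t -> sadj u v ->
  (forall x, P x -> Q x -> False) -> (forall x, R x = P x || Q x) ->
  s' == s -> t' == t -> hp R s' t'.
Proof.
move=> A B a D E e1 e2; apply: (hp_eq _ e1 e2).
apply: (hp_ext _ (hp_cat A B a D)) => x; by rewrite E.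
Qed.
Arguments hp_catE {P Q R s u v t s' t'}.

Lemma hp_row x0 x1 y : x0 <= x1 -> hp (rect x0 x1 y y) (x1,y) (x0,y).
Proof.
move=> le; have -> : x1 = x0 + (x1 - x0) by lia.
elim: (x1 - x0) => [|d IH].
- rewrite addn0; apply: (hp_ext _ (hp1 _)); fin2.
- apply: (hp_catE (hp1 (x0 + d.+1, y)) IH); fin2.
Qed.

Lemma hp_col x y0 y1 : y0 <= y1 -> hp (rect x x y0 y1) (x,y1) (x,y0).
Proof.
move=> le; have -> : y1 = y0 + (y1 - y0) by lia.
elim: (y1 - y0) => [|d IH].
- rewrite addn0; apply: (hp_ext _ (hp1 _)); fin2.
- apply: (hp_catE (hp1 (x, y0 + d.+1)) IH); fin2.
Qed.

Lemma hpZ x0 x1 y : x0 <= x1 -> hp (rect x0 x1 y y.+1) (x1,y) (x0,y.+1).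
Proof.
move=> le; have -> : x1 = x0 + (x1 - x0) by lia.
elim: (x1 - x0) => [|d IH].
- apply: (hp_catE (hp1 (x0, y)) (hp1 (x0, y.+1))); fin2.
- apply: (hp_catE (hp_cat (hp1 (x0 + d.+1, y)) (hp1 (x0 + d.+1, y.+1)) _ _) IH); fin2.
Qed.

Lemma hpT x0 x1 y0 y1 : x0 <= x1 -> y0 <= y1 -> hp (rect x0 x1 y0 y1) (x1,y0) (x0,y1).
Proof.
move=> le le2; have -> : y1 = y0 + (y1 - y0) by lia.
move: (y1 - y0) => h {le2 y1}.
elim: h {-2}h (leqnn h) y0 => [|N IH] [|[|h]] hN y0 //.
- rewrite addn0; exact: hp_row.
- rewrite addn0; exact: hp_row.
- rewrite addn1; exact: hpZ.
- apply: (hp_catE (hp_cat (hp_row x0 x1 y0 le) (hp_rev (hp_row x0 x1 y0.+1 le)) _ _)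
     (IH h _ y0.+2)); fin2.
Qed.

Lemma hp_mirx x0 x1 y0 y1 s t : hp (rect x0 x1 y0 y1) s t ->
  hp (rect x0 x1 y0 y1) (x0+x1-s.1, s.2) (x0+x1-t.1, t.2).
Proof.
move=> H; apply: (hp_map (fun v => (x0+x1-v.1, v.2)) H).
- move=> [a b] [c d]; fin.
- move=> [a b] [c d]; rewrite /rect /= => h1 h2 [e1 e2]; congr pair; lia.
- move=> [a b] h; exists (x0+x1-a, b); first by move: h; fin.
  move: h; rewrite /rect /= => h; congr pair; lia.
- move=> [a b]; fin.
Qed.
Arguments hp_mirx {x0 x1 y0 y1 s t}.

Lemma hp_miry x0 x1 y0 y1 s t : hp (rect x0 x1 y0 y1) s t ->
  hp (rect x0 x1 y0 y1) (s.1, y0+y1-s.2) (t.1, y0+y1-t.2).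
Proof.
move=> H; apply: (hp_map (fun v => (v.1, y0+y1-v.2)) H).
- move=> [a b] [c d]; fin.
- move=> [a b] [c d]; rewrite /rect /= => h1 h2 [e1 e2]; congr pair; lia.
- move=> [a b] h; exists (a, y0+y1-b); first by move: h; fin.
  move: h; rewrite /rect /= => h; congr pair; lia.
- move=> [a b]; fin.
Qed.

Lemma hpTM x0 x1 y0 y1 : x0 <= x1 -> y0 <= y1 -> hp (rect x0 x1 y0 y1) (x0,y0) (x1,y1).
Proof.
move=> le le2; apply: (hp_eq (hp_mirx (hpT x0 x1 y0 y1 le le2))); fin.
Qed.

Lemma hpSS x0 x1 y0 y1 : x0 < x1 -> y0 <= y1 -> hp (rect x0 x1 y0 y1) (x0,y1) (x1,y1).
Proof.
move=> le le2; apply: (hp_catE (hp_col x0 y0 y1 le2) (hpTM (x0.+1) x1 y0 y1 le le2)); fin2.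
Qed.
Arguments hp_miry {x0 x1 y0 y1 s t}.

Lemma hpFAR x0 x1 y0 y1 sx : x0 < x1 -> y0 < y1 -> x0 <= sx <= x1 ->
  hp (rect x0 x1 y0 y1) (sx,y0) (x0,y1).
Proof.
move=> h1 h2 h3.
case: (ltnP y0.+1 y1) => hy.
- have A : hp (rect x0 x1 y0 y0.+1) (sx,y0) (x1,y0.+1).
  { case: (ltnP sx x1) => hs.
    - apply: (hp_catE (hp_cat (hp_row x0 sx y0 _) (hp_rev (hp_row x0 sx y0.+1 _)) _ _)
         (hpTM sx.+1 x1 y0 y0.+1 hs _)); fin2.
    - apply: (hp_catE (hp_row x0 sx y0 _) (hp_rev (hp_row x0 sx y0.+1 _))); fin2. }
  apply: (hp_catE A (hpT x0 x1 y0.+2 y1 _ _)); fin2.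
- have A : hp (rect sx x1 y0 y1) (sx,y0) (sx,y1).
  { apply: (hp_catE (hp_rev (hp_row sx x1 y0 _)) (hp_row sx x1 y1 _)); fin2. }
  case: (ltnP x0 sx) => hs.
  + apply: (hp_catE A (hpT x0 (sx - 1) y0 y1 _ _)); fin2.
  + have -> : x0 = sx by lia. exact: A.
Qed.

Lemma hpK x0 x1 y0 y1 s : x0 < x1 -> y0 < y1 -> rect x0 x1 y0 y1 s -> s != (x0,y1) ->
  hp (rect x0 x1 y0 y1) s (x0,y1).
Proof.
case: s => sx sy h1 h2; rewrite /rect /= xpair_eqE => hs hne.
case: (ltnP y0 sy) => a; last first.
  apply: (hp_eq (hpFAR x0 x1 y0 y1 sx h1 h2 _)); fin.
case: (ltnP sy y1) => b; last first.
  apply: (hp_catE (hp_cat (hp_rev (hp_row sx x1 y1 _)) (hp_rev (hpTM sx x1 y0 (y1-1) _ _)) _ _)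
     (hpT x0 (sx-1) y0 y1 _ _)); fin2.
case: (ltnP sx x1) => c.
- have A : hp (fun v => rect x0 sx sy sy v || rect x0 x1 y0 (sy-1) v) (sx,sy) (x1,sy-1).
  { apply: (hp_cat (hp_row x0 sx sy _) (hpSS x0 x1 y0 (sy-1) _ _)); fin2. }
  case: (ltnP sy.+1 y1) => d.
  + apply: (hp_catE (hp_cat A (hp_row sx.+1 x1 sy _) _ _) (hpFAR x0 x1 sy.+1 y1 sx.+1 _ _ _)); fin2.
  + apply: (hp_catE (hp_cat A (hpT sx.+1 x1 sy y1 _ _) _ _) (hp_row x0 sx y1 _)); fin2.
- apply: (hp_catE (hp_cat (hp_cat (hp1 (sx,sy)) (hp_rev (hpSS x0 x1 y0 (sy-1) _ _)) _ _)
     (hp_rev (hp_row x0 (x1-1) sy _)) _ _) (hpT x0 x1 sy.+1 y1 _ _)); fin2.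
Qed.

Lemma hpTOP m y0 y1 s : 2 <= m -> y0 <= y1 -> rect 1 m y0 y1 s ->
  (y0 = y1 -> 3 <= m -> s = (m,y1)) ->
  exists2 e, (e == (1,y1)) || (e == (2,y1)) & hp (rect 1 m y0 y1) s e.
Proof.
move=> hm hy hs hd.
case: (ltnP y0 y1) => a.
- case: (eqVneq s (1,y1)) => e.
  + exists (2,y1); first by rewrite eqxx orbT.
    rewrite e; apply: hp_rev; apply: hpK => //; fin.
  + exists (1,y1); first by rewrite eqxx.
    exact: hpK.
- have ey : y0 = y1 by lia.
  subst y0.
  case: (ltnP 2 m) => b.
  + rewrite (hd erefl b); exists (1,y1); first by rewrite eqxx.
    apply: hp_row; lia.
  + have em : m = 2 by lia.
    subst m; case: s hs {hd} => sx sy hs.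
    case: (eqVneq sx 1) => e.
    * exists (2,y1); first by rewrite eqxx orbT.
      apply: (hp_eq (hp_rev (hp_row 1 2 y1 _))); move: hs; fin.
    * exists (1,y1); first by rewrite eqxx.
      apply: (hp_eq (hp_row 1 2 y1 _)); move: hs e; fin.
Qed.

Lemma hpBOT m y0 y1 t : 2 <= m -> y0 <= y1 -> rect 1 m y0 y1 t ->
  (y0 = y1 -> 3 <= m -> t = (m,y0)) ->
  exists2 e, (e == (1,y0)) || (e == (2,y0)) & hp (rect 1 m y0 y1) e t.
Proof.
case: t => tx ty hm hy ht hd.
have [[ex ey] He H] := hpTOP m y0 y1 (tx, y0+y1-ty) hm hy
  ltac:(move: ht; fin) ltac:(move=> e b; have := hd e b; case=> -> ->; congr pair; lia).
exists (ex, y0+y1-ey).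
  move: He; rewrite !xpair_eqE; lia.
apply: hp_rev; apply: (hp_eq (hp_miry H)); move: ht; fin.
Qed.

Lemma box_uniq m n : uniq (box m n).
Proof.
rewrite /box; apply: allpairs_uniq; try exact: iota_uniq.
by move=> [a b] [c d] _ _ /=.
Qed.

Lemma in_box m n x y : 1 <= x <= m -> 1 <= y <= n -> (x,y) \in box m n.
Proof.
move=> h1 h2; rewrite /box; apply: allpairs_f; rewrite mem_iota; lia.
Qed.

Lemma degC1 m n k l c w u0 : u0 \in box m n ->
  (forall u, inC m n k l c u && sadj w u = (u == u0)) -> degC m n k l c w = 1.
Proof.
move=> H E; rewrite /degC size_filter (eq_count E).
have := count_uniq_mem u0 (box_uniq m n); rewrite H /=.
by [].
Qed.

Lemma cross Y u p : path sadj u p -> u.2 <= Y -> Y <= (last u p).2 ->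
  exists2 x, x \in u :: p & x.2 = Y.
Proof.
elim: p u => [|y p IH] u /=.
- move=> _ a b; exists u; [by rewrite inE | lia].
- move=> /andP [a b] h1 h2.
  case: (ltnP u.2 Y) => c.
  + have hy : y.2 <= Y by move: a c; rewrite /sadj => /and5P [_ _ _ _ q] c'; lia.
    have [x xi xe] := IH y b hy h2.
    exists x => //; by rewrite inE xi orbT.
  + exists u; [by rewrite inE eqxx | lia].
Qed.

Lemma mid_cut m n k l c v : 1 <= c -> 1 <= n - l - c -> m - k = 1 ->
  inC m n k l c v -> c < v.2 <= c + l -> cut_vertex m n k l c v.
Proof.
case: v => vx vy hc hd ha hv /= hm; split => //.
exists (1,1), (1,n); split.
- rewrite /inC /=; lia.
- rewrite /= xpair_eqE; move: hm => /=; lia.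
- rewrite /inC /=; lia.
- rewrite /= xpair_eqE; move: hm => /=; lia.
- move=> [p [h1 h2 h3]].
  have [x xi xe] := cross vy (1,1) p h1 ltac:(move: hm => /=; lia)
     ltac:(rewrite h2 /=; move: hm => /=; lia).
  move: xi; rewrite inE => /orP [/eqP xe1|xp].
  + move: xe hm; rewrite xe1 /=; lia.
  + have := allP h3 x xp; case: x {xp} xe => a b /= ->.
    move: hv; rewrite /inC /= xpair_eqE; lia.
Qed.

Lemma core m n k l c s t : 2 <= m -> 1 <= l -> 1 <= c -> 1 <= n - l - c -> m - k = 1 ->
  rect 1 m 1 c s -> rect 1 m (c+l+1) n t ->
  (1 = c -> 3 <= m -> s = (m,c)) -> (c+l+1 = n -> 3 <= m -> t = (m,c+l+1)) ->
  ham_path m n k l c s t.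
Proof.
move=> hm hl hc hd ha hs ht es et.
have [[a1 b1] He1 H1] := hpTOP m 1 c s hm hc hs es.
have [[a2 b2] He2 H2] := hpBOT m (c+l+1) n t hm ltac:(lia) ht et.
have M := hp_rev (hp_col 1 (c+1) (c+l) ltac:(lia)).
move: He1 He2; rewrite !xpair_eqE => He1 He2.
have X := hp_cat (hp_cat H1 M ltac:(fin) ltac:(fin2)) H2 ltac:(fin) ltac:(fin2).
suff : hp (inC m n k l c) s t by [].
apply: (hp_ext _ X); move=> [x y]; rewrite /inC /rect /=; lia.
Qed.

Theorem lemma8 (m n k l c : nat) (s t : vtx) :
  2 <= m -> 3 <= n -> 1 <= k -> 1 <= l -> 1 <= c ->
  1 <= n - l - c -> 1 <= m - k ->
  m - k = 1 ->
  inC m n k l c s -> inC m n k l c t -> s != t -> s.1 <= t.1 ->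
  ~ F1 m n k l c s t -> ~ F3 m n k l c s t -> ~ F9 m k l c s t ->
  ham_path m n k l c s t.
Proof.
move=> hm hn hk hl hc hd _ ha hs ht hst _ nF1 nF3 nF9.
have sm : ~ (c < s.2 <= c + l).
  by move=> h; apply: nF1; left; exact: mid_cut.
have tm : ~ (c < t.2 <= c + l).
  by move=> h; apply: nF1; right; left; exact: mid_cut.
have D1 : c = 1 -> 3 <= m -> degC m n k l c (m,1) = 1.
  move=> e1 e2; apply: (degC1 _ _ _ _ _ _ (m-1,1)); first by apply: in_box; lia.
  move=> [x y]; rewrite /inC /sadj /= !xpair_eqE; lia.
have D2 : n - l - c = 1 -> 3 <= m -> degC m n k l c (m,n) = 1.
  move=> e1 e2; apply: (degC1 _ _ _ _ _ _ (m-1,n)); first by apply: in_box; lia.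
  move=> [x y]; rewrite /inC /sadj /= !xpair_eqE; lia.
have inm1 : inC m n k l c (m,1) by rewrite /inC /=; lia.
have inmn : inC m n k l c (m,n) by rewrite /inC /=; lia.
case: s hs hst sm nF1 nF3 nF9 => sx sy hs hst sm nF1 nF3 nF9.
case: t ht hst tm nF1 nF3 nF9 => tx ty ht hst tm nF1 nF3 nF9.
move: hs ht sm tm nF9; rewrite /inC /= => hs ht sm tm nF9.
have NF3 : forall w, inC m n k l c w -> degC m n k l c w = 1 ->
   w != (sx,sy) -> w != (tx,ty) -> False.
  by move=> w a b c1 d; apply: nF3; exists w.
case: (leqP sy c) => Ts.
- have Tt : c + l < ty.
    case: (leqP ty (c + l)) => // q; exfalso; apply: nF9; split => //=; lia.
  apply: core => //; try (rewrite /rect /=; lia).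
  + move=> e1 e2; case: (eqVneq (sx,sy) (m,c)) => // ne; exfalso.
    apply: (NF3 (m,1) inm1 (D1 (esym e1) e2)); move: ne; rewrite !xpair_eqE; lia.
  + move=> e1 e2; case: (eqVneq (tx,ty) (m,c+l+1)) => // ne; exfalso.
    apply: (NF3 (m,n) inmn (D2 ltac:(lia) e2)); move: ne; rewrite !xpair_eqE; lia.
- have Ss : c + l < sy by lia.
  have Tt : ty <= c.
    case: (leqP ty c) => // q; exfalso; apply: nF9; split => //=; lia.
  apply: hp_rev.
  apply: core => //; try (rewrite /rect /=; lia).
  + move=> e1 e2; case: (eqVneq (tx,ty) (m,c)) => // ne; exfalso.
    apply: (NF3 (m,1) inm1 (D1 (esym e1) e2)); move: ne; rewrite !xpair_eqE; lia.
  + move=> e1 e2; case: (eqVneq (sx,sy) (m,c+l+1)) => // ne; exfalso.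
    apply: (NF3 (m,n) inmn (D2 ltac:(lia) e2)); move: ne; rewrite !xpair_eqE; lia.
Qed.
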